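(* Let $\mathbf{x}_1,\ldots,\mathbf{x}_n\in\mathbb{S}^{d-1}$ lie strictly on one side of a hyperplane through the origin, i.e., there exists $\mathbf{w}\in\mathbb{R}^d$ with $\langle\mathbf{w},\mathbf{x}_i\rangle>0$ for all $i$. Let $\mathbf{y}\in\arg\min_{\mathbf{v}\in\mathbb{S}^{d-1}}\max_{j\in[n]}\angle(\mathbf{v},\mathbf{x}_j)$ (any minimizer), let $H=\mathbf{y}^\perp$ and let $P_H$ denote orthogonal projection onto $H$. Then $\mathbf{0}\in\mathrm{conv}(P_H(\mathbf{x}_1),\ldots,P_H(\mathbf{x}_n))$.
   Context: $\mathbb{S}^{d-1}$ is the unit sphere in $\mathbb{R}^d$; $\angle(\mathbf{v},\mathbf{x})\in[0,\pi]$ denotes the angle between vectors; $\mathrm{conv}$ is the convex hull. *)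

(* Defs.v *)
From HB Require Import structures.
From mathcomp Require Import all_boot all_order all_algebra.
From mathcomp Require Import reals trigo.
Set Implicit Arguments. Unset Strict Implicit. Unset Printing Implicit Defensive.
Import Order.TTheory GRing.Theory Num.Theory.
Local Open Scope ring_scope.

Definition dotv {R : realType} {d : nat} (u v : 'rV[R]_d) : R :=
  \sum_(i < d) u 0 i * v 0 i.
Definition normv {R : realType} {d : nat} (u : 'rV[R]_d) : R :=
  Num.sqrt (dotv u u).

Definition on_sphere {R : realType} {d : nat} (v : 'rV[R]_d) : Prop :=
  normv v = 1.

Definition angle {R : realType} {d : nat} (v x : 'rV[R]_d) : R :=
  acos (dotv v x / (normv v * normv x)).

(* max_{j in [n]} angle(v, x_j)  (angles are >= 0, so 0 is a neutral start) *)
Definition max_angle {R : realType} {d n : nat} (x : 'I_n -> 'rV[R]_d)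
  (v : 'rV[R]_d) : R :=
  \big[Num.max/0]_(j < n) angle v (x j).

Definition proj_perp {R : realType} {d : nat} (y x : 'rV[R]_d) : 'rV[R]_d :=
  x - (dotv x y / dotv y y) *: y.

Definition in_conv {R : realType} {d n : nat} (p : 'I_n -> 'rV[R]_d)
  (z : 'rV[R]_d) : Prop :=
  exists lam : 'I_n -> R,
    (forall i, 0 <= lam i) /\ \sum_(i < n) lam i = 1 /\
    \sum_(i < n) lam i *: p i = z.

(* Main.v *)
Require Import Defs.
From mathcomp Require Import all_boot all_order all_algebra.
From mathcomp Require Import reals trigo.
From mathcomp Require Import ring lra.
Import Order.TTheory GRing.Theory Num.Theory.
Local Open Scope ring_scope.

Section Dot.
Context {R : realType} {d : nat}.
Implicit Types u v w : 'rV[R]_d.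

Lemma dotvC u v : dotv u v = dotv v u.
Proof. by apply: eq_bigr => i _; rewrite mulrC. Qed.

Lemma dotvDl u v w : dotv (u + v) w = dotv u w + dotv v w.
Proof. by rewrite /dotv -big_split; apply: eq_bigr => i _; rewrite !mxE mulrDl. Qed.

Lemma dotvZl (a : R) u w : dotv (a *: u) w = a * dotv u w.
Proof. by rewrite /dotv mulr_sumr; apply: eq_bigr => i _; rewrite !mxE mulrA. Qed.

Lemma dotvNl u w : dotv (- u) w = - dotv u w.
Proof. by rewrite -scaleN1r dotvZl mulN1r. Qed.

Lemma dotvBl u v w : dotv (u - v) w = dotv u w - dotv v w.
Proof. by rewrite dotvDl dotvNl. Qed.

Lemma dotvDr u v w : dotv w (u + v) = dotv w u + dotv w v.
Proof. by rewrite dotvC dotvDl !(dotvC w). Qed.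

Lemma dotvZr (a : R) u w : dotv w (a *: u) = a * dotv w u.
Proof. by rewrite dotvC dotvZl dotvC. Qed.

Lemma dotvBr u v w : dotv w (u - v) = dotv w u - dotv w v.
Proof. by rewrite dotvC dotvBl !(dotvC w). Qed.

Lemma dotv0l w : dotv 0 w = 0.
Proof. by rewrite -(scale0r 0) dotvZl mul0r. Qed.

Lemma dotvv_ge0 u : 0 <= dotv u u.
Proof. by apply: sumr_ge0 => i _; rewrite -expr2 sqr_ge0. Qed.

Lemma dotvv_eq0 u : dotv u u = 0 -> u = 0.
Proof.
move=> h; apply/rowP => i; rewrite mxE.
have := h; rewrite /dotv (bigD1 i) //= => /eqP; rewrite paddr_eq0.
- by case/andP; rewrite mulf_eq0 orbb => /eqP.
- by rewrite -expr2 sqr_ge0.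
- by apply: sumr_ge0 => j _; rewrite -expr2 sqr_ge0.
Qed.

Lemma dotv_sumr I (r : seq I) (P : pred I) (F : I -> 'rV[R]_d) w :
  dotv w (\sum_(i <- r | P i) F i) = \sum_(i <- r | P i) dotv w (F i).
Proof.
elim/big_rec2: _ => [|i a b _ <-]; last by rewrite dotvDr.
by rewrite dotvC dotv0l.
Qed.

Lemma sphere_dot u : on_sphere u -> dotv u u = 1.
Proof.
rewrite /on_sphere /normv => h.
by rewrite -(sqr_sqrtr (dotvv_ge0 u)) h expr1n.
Qed.

Lemma sphere_dot_bound u v : on_sphere u -> on_sphere v ->
  -1 <= dotv u v <= 1.
Proof.
move=> /sphere_dot hu /sphere_dot hv.
have h1 := dotvv_ge0 (u - v); have h2 := dotvv_ge0 (u + v).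
rewrite !dotvBl !dotvBr !dotvDl !dotvDr hu hv (dotvC v u) in h1 h2.
apply/andP; split; lra.
Qed.

End Dot.

Definition ext {T} {n} (f : 'I_n -> T) (a : T) (i : 'I_n.+1) : T :=
  if unlift ord_max i is Some j then f j else a.

Lemma ext_lift {T} {n} (f : 'I_n -> T) a j : ext f a (lift ord_max j) = f j.
Proof. by rewrite /ext liftK. Qed.

Lemma ext_max {T} {n} (f : 'I_n -> T) a : ext f a ord_max = a.
Proof. by rewrite /ext unlift_none. Qed.

Lemma big_recr_lift (R : Type) (idx : R) (op : Monoid.com_law idx) n (F : 'I_n.+1 -> R) :
  \big[op/idx]_(i < n.+1) F i = op (\big[op/idx]_(j < n) F (lift ord_max j)) (F ord_max).
Proof.
rewrite big_ord_recr /=; congr (op _ _); apply: eq_bigr => j _.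
by congr F; apply: val_inj; rewrite /= /bump leqNgt ltn_ord.
Qed.

Lemma small_t (R : realType) n (f e : 'I_n -> R) :
  (forall i, 0 < f i) -> exists t, 0 < t /\ forall i, t * e i < f i.
Proof.
move=> hf.
set S := \sum_(i < n) `|e i| / f i.
have hS0 : forall i, 0 <= `|e i| / f i by move=> i; rewrite divr_ge0 // ltW.
have hS : 0 <= S by apply: sumr_ge0.
exists (1 + S)^-1; split; first by rewrite invr_gt0; lra.
move=> i.
have hiS : `|e i| / f i <= S.
  by rewrite /S (bigD1 i) //= lerDl; apply: sumr_ge0.
have hfi := hf i.
have he : e i <= `|e i| by apply: ler_norm.
have hr : `|e i| = (`|e i| / f i) * f i by rewrite divfK // gt_eqF.
rewrite mulrC -[_ * _^-1]/(_ / _) ltr_pdivrMr; last lra.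
set r := `|e i| / f i in hiS hr.
rewrite hr in he. nra.
Qed.

Lemma forall_lift {T} n (P : 'I_n.+1 -> T -> Prop) (t : T) :
  (forall j, P (lift ord_max j) t) -> P ord_max t -> forall i, P i t.
Proof. by move=> h1 h2 i; case: (unliftP ord_max i) => [j ->|->]. Qed.

Lemma gordan (R : realType) d n (p : 'I_n -> 'rV[R]_d) :
  in_conv p 0 \/ exists u, forall i, 0 < dotv u (p i).
Proof.
elim: n p => [|n IH] p; first by right; exists 0; case.
set p' := fun j => p (lift ord_max j); set w := p ord_max.
case: (IH p') => [[lam [l0 [l1 l2]]] | [u hu]].
  left; exists (ext lam 0); split.
    by apply: (@forall_lift _ _ (fun i _ => 0 <= ext lam 0 i) tt) => [j|];
      rewrite ?ext_lift ?ext_max.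
  rewrite !big_recr_lift /= ext_max addr0 scale0r addr0.
  by split; under eq_bigr => j _ do rewrite ext_lift.
have [huw|huw] := ltrP 0 (dotv u w).
  right; exists u.
  by apply: (@forall_lift _ _ (fun i _ => 0 < dotv u (p i)) tt).
set g := - dotv u w.
have hg : 0 <= g by rewrite /g oppr_ge0.
set a := fun j => dotv u (p' j).
set q := fun j => a j *: w + g *: p' j.
case: (IH q) => [[mu [m0 [m1 m2]]] | [v hv]].
  set A := \sum_(j < n) mu j * a j.
  have hA : 0 < A.
    rewrite lt0r; apply/andP; split; last first.
      by apply: sumr_ge0 => j _; apply: mulr_ge0 => //; apply: ltW; apply: hu.
    apply/eqP => /psumr_eq0P h.
    have : \sum_(j < n) mu j = 0.
      apply: big1 => j _; have /eqP := h (fun i _ => mulr_ge0 (m0 i) (ltW (hu i))) j isT.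
      by rewrite mulf_eq0 (gt_eqF (hu j)) orbF => /eqP.
    by rewrite m1 => /eqP; rewrite oner_eq0.
  set T := A + g.
  have hT : 0 < T by rewrite /T; lra.
  left; exists (ext (fun j => g * mu j / T) (A / T)); split.
    apply: (@forall_lift _ _ (fun i _ => 0 <= ext (fun j => g * mu j / T) (A / T) i) tt) => [j|];
      rewrite ?ext_lift ?ext_max.
      by rewrite divr_ge0 ?mulr_ge0 // ltW.
    by rewrite divr_ge0 // ltW.
  rewrite !big_recr_lift /= ext_max; split.
    under eq_bigr => j _ do rewrite ext_lift.
    rewrite -mulr_suml -mulr_sumr m1 mulr1 -mulrDl.
    by rewrite addrC divff // gt_eqF.
  under eq_bigr => j _ do rewrite ext_lift.
  have : \sum_(j < n) mu j *: q j = A *: w + g *: \sum_(j < n) mu j *: p' j.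
    rewrite /q /A scaler_suml scaler_sumr -big_split /=; apply: eq_bigr => j _.
    by rewrite scalerDr !scalerA mulrC [g * _]mulrC.
  rewrite m2 => h0.
  have -> : \sum_(j < n) (g * mu j / T) *: p (lift ord_max j) + (A / T) *: p ord_max
     = T^-1 *: (A *: w + g *: \sum_(j < n) mu j *: p' j).
    rewrite scalerDr scaler_sumr scalerA addrC; congr (_ + _); first by rewrite mulrC.
    rewrite scaler_sumr; apply: eq_bigr => j _; rewrite !scalerA /p'.
    by congr (_ *: _); rewrite mulrC mulrA.
  by rewrite -h0 scaler0.
have [w0|wn0] := eqVneq w 0.
  left; exists (ext (fun _ => 0) 1); split.
    by apply: (@forall_lift _ _ (fun i _ => 0 <= ext (fun _ => 0) 1 i) tt) => [j|];
      rewrite ?ext_lift ?ext_max.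
  rewrite !big_recr_lift /= ext_max; split.
    by under eq_bigr => j _ do rewrite ext_lift; rewrite big1 // add0r.
  under eq_bigr => j _ do rewrite ext_lift scale0r.
  by rewrite big1 // add0r scale1r -/w w0.
have hww : 0 < dotv w w.
  rewrite lt0r dotvv_ge0 andbT; apply/eqP => /dotvv_eq0; exact/eqP.
have [t [ht0 ht]] := @small_t R n _ (fun j => - dotv w (p' j)) hv.
right; exists (g *: v + dotv v w *: u + t *: w).
apply: (@forall_lift _ _ (fun i _ => 0 < dotv (g *: v + dotv v w *: u + t *: w) (p i)) tt) => [j|].
  have := ht j; rewrite /q !dotvDl !dotvZl !dotvDr !dotvZr /a -/(p' j).
  rewrite (dotvC w (p' j)); lra.
rewrite -/w !dotvDl !dotvZl /g (dotvC v w).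
have -> : dotv w v * dotv u w = - (- dotv u w * dotv w v) by ring.
rewrite -/g; nra.
Qed.

Lemma acos_lt (R : realType) (a b : R) : -1 <= a <= 1 -> -1 <= b <= 1 ->
  a < b -> acos b < acos a.
Proof.
move=> ha hb hab.
have ia : acos a \in `[0, pi] by rewrite in_itv /= acos_ge0 // acos_lepi.
have ib : acos b \in `[0, pi] by rewrite in_itv /= acos_ge0 // acos_lepi.
rewrite -(ltr_cos ib ia) acosK ?acosK // in_itv /=.
Qed.

Theorem lemma3p9 (R : realType) (d n : nat) (x : 'I_n -> 'rV[R]_d)
  (hn : (0 < n)%N)
  (hx : forall i, on_sphere (x i))
  (hw : exists w : 'rV[R]_d, forall i, 0 < dotv w (x i))
  (y : 'rV[R]_d) (hy : on_sphere y)
  (hmin : forall v : 'rV[R]_d, on_sphere v -> max_angle x y <= max_angle x v) :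
  in_conv (fun i => proj_perp y (x i)) 0.
Proof.
case: (@gordan R d n (fun i => proj_perp y (x i))) => [//|[u hu]]; exfalso.
have hyy := sphere_dot _ hy.
set u0 := u - dotv u y *: y.
have hu0y : dotv u0 y = 0 by rewrite /u0 dotvBl dotvZl hyy; ring.
set b := fun i => dotv u0 (x i).
have hb : forall i, 0 < b i.
  move=> i; have := hu i; rewrite /proj_perp /b /u0 hyy divr1 dotvBr dotvZr dotvBl dotvZl.
  by rewrite (dotvC y (x i)) mulrC.
set k := dotv u0 u0.
have hk : 0 <= k by apply: dotvv_ge0.
have angleE : forall v, on_sphere v -> forall i, angle v (x i) = acos (dotv v (x i)).
  by move=> v hv i; rewrite /angle hv (hx i) mulr1 divr1.
set M := max_angle x y.
have /bigmax_leP [hM0 hle] := lexx M.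
have hMpi : M <= pi.
  apply/bigmax_leP; split; first exact: pi_ge0.
  by move=> i _; rewrite angleE // acos_lepi // sphere_dot_bound.
have iM : M \in `[0, pi] by rewrite in_itv /= hM0 hMpi.
set c := cos M.
have hc1 : -1 <= c <= 1 by rewrite cos_geN1 cos_le1.
have hac : forall i, c <= dotv y (x i).
  move=> i; rewrite leNgt; apply/negP => hlt.
  have := hle i isT; rewrite angleE // leNgt => /negP; apply.
  rewrite -{1}(cosK iM); apply: acos_lt => //; exact: sphere_dot_bound.
set s := fun t : R => Num.sqrt (1 + t ^+ 2 * k).
have hs1 : forall t, 1 <= s t.
  move=> t; rewrite -sqrtr1 ler_sqrt; last by rewrite addr_ge0 // mulr_ge0 // sqr_ge0.
  by rewrite lerDl mulr_ge0 // sqr_ge0.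
have hs2 : forall t, s t ^+ 2 = 1 + t ^+ 2 * k.
  by move=> t; rewrite sqr_sqrtr // addr_ge0 // mulr_ge0 // sqr_ge0.
have [t ht] : exists t, forall i, c * s t < dotv y (x i) + t * b i.
  have [c0|c0] := lerP c 0.
    exists 1 => i; have := hs1 1; have := hac i; have := hb i; nra.
  have [t [ht0 ht]] := @small_t R n (fun i => 2 * dotv y (x i) * b i)
     (fun _ => c ^+ 2 * k) (fun i => mulr_gt0 (mulr_gt0 (ltr0Sn _ 1) (lt_le_trans c0 (hac i))) (hb i)).
  exists t => i; have := ht i; have := hac i; have := hb i; have := hs2 t; have := hs1 t.
  move=> h1 h2 h3 h4 h5.
  have hsq : (c * s t) ^+ 2 < (dotv y (x i) + t * b i) ^+ 2.
    rewrite exprMn h2; nra.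
  have hX : 0 <= c * s t by rewrite mulr_ge0 // ?ltW //; lra.
  have hY : 0 < dotv y (x i) + t * b i by nra.
  move: hsq hX hY; move: (c * s t) (dotv y (x i) + t * b i) => X Y.
  rewrite !expr2 => ? ? ?; nra.
set v := (s t)^-1 *: (y + t *: u0).
have hsp : 0 < s t by apply: lt_le_trans (hs1 t).
have hvv : dotv v v = 1.
  rewrite /v dotvZl dotvZr !dotvDl !dotvDr !dotvZl !dotvZr hyy hu0y (dotvC y u0) hu0y -/k.
  have -> : 1 + t * 0 + (t * 0 + t * (t * k)) = s t ^+ 2 by rewrite hs2; ring.
  by field; rewrite gt_eqF.
have hv : on_sphere v by rewrite /on_sphere /normv hvv sqrtr1.
have hdv : forall i, c < dotv v (x i).
  move=> i; rewrite /v dotvZl dotvDl dotvZl -/(b i) ltr_pdivlMl // mulrC; exact: ht.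
have hlt : max_angle x v < M.
  apply: bigmax_lt.
    rewrite lt_neqAle hM0 andbT; apply/eqP => M0.
    have := hdv (Ordinal hn); rewrite /c -M0 cos0.
    have /andP[_ h1] := sphere_dot_bound _ _ hv (hx (Ordinal hn)); lra.
  move=> i _; rewrite angleE // -(cosK iM); apply: acos_lt => //.
  exact: sphere_dot_bound.
by have := hmin v hv; rewrite -/M leNgt hlt.
Qed.
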